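(* Let $1\le k\le d$ be integers and let $(p_m)_{m\in\mathbb Z}$ be the sequence defined below. Then for every integer $m\ge0$, $$p_m=\sum_{\ell=0}^{m}(-1)^\ell(d-k)^{m-\ell}\binom{d-k+\ell-1}{\ell}.$$ In particular, for an integer $\mu\ge0$, the numbers $t_m:=p_{\mu-m}$ ($0\le m\le\mu$) are the unique solution of $t_\mu=1$ and $t_m=\sum_{j=m+1}^{\mu}t_j\,(j-m-1)\binom{d-k+1}{j-m}$ for $0\le m<\mu$.
   Context: Sequence: $p_m=0$ for $m<0$, $p_0=1$, and $p_m=\sum_{\ell=1}^{m}(\ell-1)\binom{d-k+1}{\ell}p_{m-\ell}$ for $m\ge1$. Conventions: $0^0=1$; for integers $r$ and $\ell\ge0$, $\binom{r}{\ell}=r(r-1)\cdots(r-\ell+1)/\ell!$ (so $\binom{r}{0}=1$), and $\binom{r}{\ell}=0$ for $\ell<0$. *)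

(* Defs.v *)
From HB Require Import structures.
From mathcomp Require Import all_boot all_order all_algebra.
Set Implicit Arguments. Unset Strict Implicit. Unset Printing Implicit Defensive.

(* Main.v *)
Require Import Defs.
From HB Require Import structures.
From mathcomp Require Import all_boot all_order all_algebra.
From mathcomp Require Import zify ring.
Import Order.TTheory GRing.Theory Num.Theory.
Local Open Scope ring_scope.

Definition eqN (N : nat) (U V : {poly int}) := forall i, (i < N)%N -> U`_i = V`_i.

Lemma eqN_mull N W U V : eqN N U V -> eqN N (W * U) (W * V).
Proof.
move=> h i hi; rewrite !coefM; apply: eq_bigr => j _; rewrite h //.
exact: leq_ltn_trans (leq_subr j i) hi.
Qed.

Lemma eqN_mulr N W U V : eqN N U V -> eqN N (U * W) (V * W).
Proof. by move=> h; rewrite ![_ * W]mulrC; apply: eqN_mull. Qed.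

Lemma eqN_one N U V : eqN N U 1 -> eqN N V 1 -> eqN N (U * V) 1.
Proof.
move=> hU hV i hi; rewrite (@eqN_mulr N V U 1 hU i hi) mul1r; exact: hV.
Qed.

Lemma coefXD1n (n i : nat) : ((('X + 1) ^+ n : {poly int})`_i) = ('C(n, i))%:Z.
Proof.
elim: n i => [|n IH] i.
  by rewrite expr0 coefC; case: i.
rewrite exprSr mulrDr mulr1 coefD coefMX !IH.
case: i => [|i] /=; first by rewrite !bin0 add0r.
by rewrite binS; lia.
Qed.

Definition Ap (n N : nat) : {poly int} :=
  \poly_(i < N) ((-1) ^+ i * ('C(n + i - 1, i))%:Z).

Lemma A_rec n N : eqN N (('X + 1) * Ap n.+1 N) (Ap n N).
Proof.
move=> i hi; rewrite mulrDl mul1r coefD coefXM !coef_poly hi.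
case: i hi => [|j] hj /=; first by rewrite add0r !expr0 !bin0.
rewrite (ltnW hj).
have -> : (n.+1 + j - 1 = n + j)%N by lia.
have -> : (n.+1 + j.+1 - 1 = (n + j).+1)%N by lia.
have -> : (n + j.+1 - 1 = n + j)%N by lia.
rewrite binS exprS PoszD; ring.
Qed.

Lemma EA n N : eqN N (('X + 1) ^+ n * Ap n N) 1.
Proof.
elim: n => [|n IH].
  move=> i hi; rewrite expr0 mul1r coef_poly hi coefC.
  case: i hi => [|i] hi /=; first by rewrite bin0.
  rewrite bin_small; last by lia.
  by rewrite mulr0.
move=> i hi; rewrite exprS -mulrA mulrCA (@eqN_mull N (('X + 1) ^+ n) _ _ (A_rec n N) i hi); exact: IH.
Qed.

Definition Bp (n N : nat) : {poly int} := \poly_(i < N) ((n ^ i)%N%:Z).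
Definition Fp (n : nat) : {poly int} := 1 - (n%:Z)%:P * 'X.

Lemma FB n N : eqN N (Fp n * Bp n N) 1.
Proof.
move=> i hi; rewrite /Fp mulrBl mul1r coefB -mulrA coefCM coefXM !coef_poly hi coefC.
case: i hi => [|j] hj /=; first by rewrite expn0 mulr0 subr0.
by rewrite (ltnW hj) expnS PoszM subrr.
Qed.

Definition Cp (n : nat) : {poly int} := ('X + 1) ^+ n * Fp n.

Lemma Cp0 n : (Cp n)`_0 = 1.
Proof. by rewrite /Cp /Fp mulrBr mulr1 coefB mulrCA coefCM coefMX coefXD1n bin0 mulr0 subr0. Qed.

Lemma CpS n j : (Cp n)`_j.+1 = - (j * 'C(n.+1, j.+1))%N%:Z.
Proof.
rewrite /Cp /Fp mulrBr mulr1 coefB mulrCA coefCM coefMX /= !coefXD1n.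
have key : (j * 'C(n.+1, j.+1) + 'C(n, j.+1) = n * 'C(n, j))%N.
  rewrite binS mulnDr.
  have h2 := mul_bin_left n j.
  case: (leqP j n) => hjn.
    have : (j * 'C(n, j) + j.+1 * 'C(n, j.+1) = n * 'C(n, j))%N.
      by rewrite h2 -mulnDl subnKC.
    lia.
  rewrite !bin_small //; lia.
apply/eqP; rewrite -subr_eq0; apply/eqP.
have : ('C(n, j.+1)%:Z = (n * 'C(n, j))%N%:Z - (j * 'C(n.+1, j.+1))%N%:Z) by lia.
move=> ->; rewrite PoszM; ring.
Qed.

Lemma reindex (n m mu : nat) (g : nat -> int) : (m < mu)%N ->
  \sum_(m.+1 <= j < mu.+1) (g j * (j - m - 1)%N%:Z * ('C(n.+1, j - m))%:Z)
  = \sum_(1 <= l < (mu - m).+1) ((l.-1)%:Z * ('C(n.+1, l))%:Z * g (m + l)%N).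
Proof.
move=> hm.
rewrite -(add1n m) big_addn.
have -> : (mu.+1 - m = (mu - m).+1)%N by lia.
apply: eq_bigr => j _.
have -> : (j + m - m - 1 = j.-1)%N by lia.
have -> : (j + m - m = j)%N by lia.
rewrite addnC; ring.
Qed.

Theorem lemma3 (d k : nat) (hk1 : (1 <= k)%N) (hkd : (k <= d)%N)
  (p : nat -> int)
  (p0 : p 0%N = 1)
  (pS : forall m : nat, (0 < m)%N ->
     p m = \sum_(1 <= l < m.+1) ((l.-1)%:Z * ('C(d - k + 1, l))%:Z * p (m - l)%N)) :
  (forall m : nat,
     p m = \sum_(0 <= l < m.+1)
             ((-1) ^+ l * ((d - k) ^ (m - l))%N%:Z * ('C(d - k + l - 1, l))%:Z))
  /\
  (forall (mu : nat) (t : nat -> int),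
     (t mu = 1 /\
      forall m : nat, (m < mu)%N ->
        t m = \sum_(m.+1 <= j < mu.+1) (t j * (j - m - 1)%N%:Z * ('C(d - k + 1, j - m))%:Z))
     <-> (forall m : nat, (m <= mu)%N -> t m = p (mu - m)%N)).
Proof.
move: pS; rewrite addn1; set n := (d - k)%N => pS.
split.
  move=> m; set N := m.+1.
  pose P : {poly int} := \poly_(i < N) p i.
  have CP : eqN N (Cp n * P) 1.
    move=> i hi; rewrite coefM coefC.
    case: i hi => [|i] hi.
      by rewrite big_ord1 Cp0 coef_poly hi mul1r.
    rewrite big_ord_recl Cp0 mul1r coef_poly hi /=.
    rewrite (pS i.+1 (ltn0Sn i)) big_add1 /= big_mkord.
    rewrite -big_split /=; apply: big1 => j _.
    rewrite CpS coef_poly.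
    have -> : (i.+1 - bump 0 j < N)%N by lia.
    rewrite /bump /= add1n; ring.
  have QC : eqN N ((Ap n N * Bp n N) * Cp n) 1.
    rewrite /Cp mulrACA [Ap n N * _]mulrC [Bp n N * _]mulrC.
    exact: eqN_one (EA n N) (FB n N).
  have hm : (m < N)%N by [].
  have e1 := @eqN_mulr N P _ _ QC m hm.
  have e2 := @eqN_mull N (Ap n N * Bp n N) _ _ CP m hm.
  rewrite mul1r in e1; rewrite mulr1 mulrA in e2. rewrite e1 in e2.
  rewrite coef_poly hm in e2; rewrite e2 coefM big_mkord.
  apply: eq_bigr => [[j hj]] _ /=.
  rewrite !coef_poly hj.
  have -> : (m - j < N)%N by lia.
  ring.
move=> mu t; split.
  case=> tmu trec.
  suff H : forall r, (r <= mu)%N -> t (mu - r)%N = p r.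
    move=> m hm; rewrite -(H (mu - m)%N) ?leq_subr //; congr t; lia.
  elim/ltn_ind => r IH hr.
  case: r IH hr => [|r] IH hr; first by rewrite subn0 tmu p0.
  rewrite trec; last by lia.
  rewrite reindex; last by lia.
  have -> : (mu - (mu - r.+1) = r.+1)%N by lia.
  rewrite (pS r.+1 (ltn0Sn r)).
  apply: eq_big_nat => l hl.
  have -> : (mu - r.+1 + l = mu - (r.+1 - l))%N by lia.
  rewrite IH; [done | lia | lia].
move=> H; split.
  by rewrite H // subnn p0.
move=> m hm; rewrite (H m (ltnW hm)) (@reindex n m mu t hm).
rewrite (pS (mu - m)%N); last by lia.
apply: eq_big_nat => l hl.
rewrite H; last by lia.
by rewrite subnDA.
Qed.
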